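(* Let $\chi\in\chi(G)$ be a character, $\lambda\in\Lambda^\chi$ and $x\in X$. The following are equivalent: (1) $x\in S^\chi_\lambda$; (2) the function $v\mapsto\langle\chi,v\rangle/\|v\|$ on $\sigma_x\setminus\{0\}$ attains a negative relative minimum at $\lambda$; (3) $L(S_x)\subset S^\chi_\lambda$.
   Context: $G$ diagonalizable over $\mathbf C$ acting on $X=\mathbf A^n_{\mathbf C}$ by $g\cdot x=(\chi_1(g)x_1,\dots,\chi_n(g)x_n)$. $\chi(G)$ characters, $\Gamma(G)$ one-parameter subgroups, pairing $\chi(\lambda(t))=t^{\langle\chi,\lambda\rangle}$ extended to $\mathbf R$; fixed norm $\|\cdot\|$ on $\Gamma(G)$ from an inner product on $\Gamma(G)_{\mathbf R}$ integral on $\Gamma(G)$. $[n]=\{1,\dots,n\}$; $S_x=\{i:x_i\ne0\}$; $\sigma_x=\{v\in\Gamma(G)_{\mathbf R}:\langle\chi_i,v\rangle\ge0\ \forall i\in S_x\}$ (its lattice points are the $\lambda$ with $\lim_{t\to0}\lambda(t)x$ existing). $x$ is $\chi$-unstable if some $\lambda$ with existing limit has $\langle\chi,\lambda\rangle<0$; for unstable $x$, $\lambda_{\chi,x}$ is the unique indivisible one-parameter subgroup with existing limit minimizing $\langle\chi,\lambda\rangle/\|\lambda\|$ among nonzero such. $\Lambda^\chi=\{\lambda_{\chi,x}\}$, $S^\chi_\lambda=\{x\text{ unstable}:\lambda_{\chi,x}=\lambda\}$. For $S\subset[n]$, $L(S)=\{x:x_i\ne0\iff i\in S\}$. *)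

(* Defs.v *)
From mathcomp Require Import all_boot all_order all_algebra.
From mathcomp Require Import complex.
From mathcomp Require Import Rstruct.

Set Implicit Arguments.
Unset Strict Implicit.
Unset Printing Implicit Defensive.
Import Order.TTheory GRing.Theory Num.Theory.
Local Open Scope ring_scope.

(* Model:
   - Gamma(G) is identified with Z^r  (lattice  'I_r -> int),
     Gamma(G)_R with R^r               (vectors 'I_r -> R), R = Stdlib reals.
   - A character chi only enters through the linear form <chi, . > on Gamma(G),
     which is an element of Hom(Gamma(G), Z) = Z^r : we record it as 'I_r -> int.
   - The inner product on Gamma(G)_R is given by its Gram matrix Q (integral:
     integer entries; symmetric; positive definite).
   - X = A^n_C, points x : 'I_n -> C with C = R[i]. *)

Notation Real := Rdefinitions.R.
Notation Cplx := (complex Rdefinitions.R).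

Definition lattice (r : nat) := 'I_r -> int.
Definition rvec (r : nat) := 'I_r -> Real.
Definition charf (r : nat) := 'I_r -> int.

Definition embed r (l : lattice r) : rvec r := fun j => (l j)%:~R.

Definition pair r (c : charf r) (v : rvec r) : Real :=
  \sum_(j < r) (c j)%:~R * v j.

Definition ip r (Q : 'M[int]_r) (v w : rvec r) : Real :=
  \sum_(i < r) \sum_(j < r) v i * (Q i j)%:~R * w j.
Definition nrm r (Q : 'M[int]_r) (v : rvec r) : Real := Num.sqrt (ip Q v v).

Definition is_inner_product r (Q : 'M[int]_r) : Prop :=
  Q^T = Q /\ (forall v : rvec r, (exists j, v j != 0) -> 0 < ip Q v v).

Definition supp n (x : 'I_n -> Cplx) : {set 'I_n} := [set i | x i != 0].

Definition sigma n r (chis : 'I_n -> charf r) (x : 'I_n -> Cplx) (v : rvec r)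
  : Prop := forall i, i \in supp x -> 0 <= pair (chis i) v.

(* lim_{t->0} lambda(t) x exists  (characterization recalled in the context) *)
Definition lim_exists n r (chis : 'I_n -> charf r) (x : 'I_n -> Cplx)
  (l : lattice r) : Prop := sigma chis x (embed l).

Definition lat_nonzero r (l : lattice r) : Prop := exists j, l j != 0.

Definition indivisible r (l : lattice r) : Prop :=
  lat_nonzero l /\
  forall (k : int) (mu : lattice r), (1 < k) -> ~ (forall j, l j = k * mu j).

Definition ratio r (Q : 'M[int]_r) (c : charf r) (v : rvec r) : Real :=
  pair c v / nrm Q v.

Definition unstable n r (chis : 'I_n -> charf r) (c : charf r)
  (x : 'I_n -> Cplx) : Prop :=
  exists l : lattice r, lim_exists chis x l /\ pair c (embed l) < 0.

(* l = lambda_{chi,x}: l is the (unique, by the paper) indivisible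
   one-parameter subgroup with existing limit minimizing <chi,.>/||.||
   among the nonzero ones with existing limit. *)
Definition is_optimal n r (chis : 'I_n -> charf r) (Q : 'M[int]_r)
  (c : charf r) (x : 'I_n -> Cplx) (l : lattice r) : Prop :=
  indivisible l /\ lim_exists chis x l /\
  forall mu : lattice r, lat_nonzero mu -> lim_exists chis x mu ->
    ratio Q c (embed l) <= ratio Q c (embed mu).

Definition in_S n r (chis : 'I_n -> charf r) (Q : 'M[int]_r)
  (c : charf r) (l : lattice r) (x : 'I_n -> Cplx) : Prop :=
  unstable chis c x /\ is_optimal chis Q c x l.

Definition in_Lambda n r (chis : 'I_n -> charf r) (Q : 'M[int]_r)
  (c : charf r) (l : lattice r) : Prop :=
  exists x : 'I_n -> Cplx, in_S chis Q c l x.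

Definition in_L n (S : {set 'I_n}) (y : 'I_n -> Cplx) : Prop := supp y = S.

Definition neg_rel_min n r (chis : 'I_n -> charf r) (Q : 'M[int]_r)
  (c : charf r) (x : 'I_n -> Cplx) (v0 : rvec r) : Prop :=
  sigma chis x v0 /\ (exists j, v0 j != 0) /\ ratio Q c v0 < 0 /\
  exists eps : Real, 0 < eps /\
    forall v : rvec r, sigma chis x v -> (exists j, v j != 0) ->
      nrm Q (fun j => v j - v0 j) < eps -> ratio Q c v0 <= ratio Q c v.

(* Main.v *)
Require Import Defs.
From mathcomp Require Import all_boot all_order all_algebra.
From mathcomp Require Import complex Rstruct ring lra.
From Stdlib Require Import FunctionalExtensionality.
Set Implicit Arguments.
Unset Strict Implicit.
Unset Printing Implicit Defensive.
Import Order.TTheory GRing.Theory Num.Theory.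
Local Open Scope ring_scope.

Lemma pair_lin r (c : charf r) (u w : rvec r) (a b : Real) :
  pair c (fun j => a * u j + b * w j) = a * pair c u + b * pair c w.
Proof.
rewrite /pair !mulr_sumr -big_split; apply: eq_bigr => j _ /=; ring.
Qed.

Lemma pair_scale r (c : charf r) (u : rvec r) (a : Real) :
  pair c (fun j => a * u j) = a * pair c u.
Proof.
have -> : (fun j => a * u j) = (fun j => a * u j + 0 * u j).
  by apply: functional_extensionality => j; rewrite mul0r addr0.
by rewrite pair_lin mul0r addr0.
Qed.

Lemma pair0 r (c : charf r) (u : rvec r) : (forall j, u j = 0) -> pair c u = 0.
Proof. move=> h; rewrite /pair big1 // => j _; by rewrite h mulr0. Qed.

Lemma ip_linl r (Q : 'M[int]_r) (u w z : rvec r) (a b : Real) :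
  ip Q (fun j => a * u j + b * w j) z = a * ip Q u z + b * ip Q w z.
Proof.
rewrite /ip !mulr_sumr -big_split; apply: eq_bigr => i _ /=.
rewrite !mulr_sumr -big_split; apply: eq_bigr => j _ /=; ring.
Qed.

Lemma ip_sym r (Q : 'M[int]_r) (u w : rvec r) : Q^T = Q -> ip Q u w = ip Q w u.
Proof.
move=> hQ; rewrite /ip exchange_big /=; apply: eq_bigr => i _; apply: eq_bigr => j _.
have -> : Q j i = Q i j by rewrite -{1}hQ mxE.
ring.
Qed.

Lemma ip_quad r (Q : 'M[int]_r) (u w : rvec r) (a b : Real) : Q^T = Q ->
  ip Q (fun j => a * u j + b * w j) (fun j => a * u j + b * w j) =
  a ^+ 2 * ip Q u u + 2 * a * b * ip Q u w + b ^+ 2 * ip Q w w.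
Proof.
move=> hQ; rewrite ip_linl [ip Q u _](ip_sym _ _ hQ) [ip Q w _](ip_sym _ _ hQ) !ip_linl.
rewrite (ip_sym w u hQ); ring.
Qed.

Lemma ip0 r (Q : 'M[int]_r) (u w : rvec r) : (forall j, w j = 0) -> ip Q u w = 0.
Proof.
move=> h; rewrite /ip big1 // => i _; rewrite big1 // => j _; by rewrite h mulr0.
Qed.

Lemma nonzero_dec r (v : rvec r) : (exists j, v j != 0) \/ (forall j, v j = 0).
Proof.
case: (boolP [exists j, v j != 0]) => [/existsP h|/existsPn h]; first by left.
by right => j; move: (h j); rewrite negbK => /eqP.
Qed.

Lemma ip_ge0 r (Q : 'M[int]_r) (v : rvec r) : is_inner_product Q -> 0 <= ip Q v v.
Proof.
case=> _ hp; case: (nonzero_dec v) => h; first exact/ltW/hp.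
by rewrite ip0.
Qed.

Lemma nrm_ge0 r (Q : 'M[int]_r) (v : rvec r) : 0 <= nrm Q v.
Proof. exact: sqrtr_ge0. Qed.

Lemma nrm_gt0 r (Q : 'M[int]_r) (v : rvec r) : is_inner_product Q ->
  (exists j, v j != 0) -> 0 < nrm Q v.
Proof. by move=> [_ hp] h; rewrite /nrm sqrtr_gt0; apply: hp. Qed.

Lemma cauchy_schwarz r (Q : 'M[int]_r) (u w : rvec r) : is_inner_product Q ->
  ip Q u w <= nrm Q u * nrm Q w.
Proof.
move=> HQ; have [hs hp] := HQ.
case: (nonzero_dec w) => hw; last first.
  by rewrite ip0 // mulr_ge0 // nrm_ge0.
have hC := hp _ hw.
set A := ip Q u u; set B := ip Q u w; set C := ip Q w w.
have hA : 0 <= A := ip_ge0 u HQ.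
have h := ip_ge0 (fun j => 1 * u j + (- (B / C)) * w j) HQ.
rewrite ip_quad // -/A -/B -/C in h.
have hB2 : B ^+ 2 <= A * C.
  have e : A - B ^+ 2 / C = 1 ^+ 2 * A + 2 * 1 * - (B / C) * B + (- (B / C)) ^+ 2 * C.
    by field; rewrite gt_eqF.
  have : 0 <= A - B ^+ 2 / C by rewrite e.
  rewrite subr_ge0 ler_pdivrMr //.
have -> : nrm Q u * nrm Q w = Num.sqrt (A * C) by rewrite /nrm sqrtrM.
apply: le_trans (ler_norm B) _.
by rewrite -sqrtr_sqr ler_sqrt // mulr_ge0 // ltW.
Qed.
Lemma nrm_lin r (Q : 'M[int]_r) (u w : rvec r) (a b : Real) : is_inner_product Q ->
  0 <= a -> 0 <= b ->
  nrm Q (fun j => a * u j + b * w j) <= a * nrm Q u + b * nrm Q w.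
Proof.
move=> HQ ha hb; have [hs _] := HQ.
rewrite {1}/nrm ip_quad //.
have h1 := cauchy_schwarz u w HQ.
have e : a ^+ 2 * ip Q u u + 2 * a * b * ip Q u w + b ^+ 2 * ip Q w w <=
   (a * nrm Q u + b * nrm Q w) ^+ 2.
  have eu : ip Q u u = nrm Q u ^+ 2 by rewrite /nrm sqr_sqrtr // ip_ge0.
  have ew : ip Q w w = nrm Q w ^+ 2 by rewrite /nrm sqr_sqrtr // ip_ge0.
  rewrite eu ew.
  have : 2 * a * b * ip Q u w <= 2 * a * b * (nrm Q u * nrm Q w).
    by rewrite ler_wpM2l // !mulr_ge0.
  move=> h; set X := 2 * a * b * ip Q u w in h *.
  have -> : (a * nrm Q u + b * nrm Q w) ^+ 2 =
     a ^+ 2 * nrm Q u ^+ 2 + 2 * a * b * (nrm Q u * nrm Q w) + b ^+ 2 * nrm Q w ^+ 2 by ring.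
  lra.
apply: le_trans (_ : Num.sqrt ((a * nrm Q u + b * nrm Q w) ^+ 2) <= _).
  by rewrite ler_sqrt // sqr_ge0.
by rewrite sqrtr_sqr ger0_norm // addr_ge0 // mulr_ge0 // nrm_ge0.
Qed.

Lemma nrm_scale r (Q : 'M[int]_r) (u : rvec r) (a : Real) : is_inner_product Q ->
  nrm Q (fun j => a * u j) = `|a| * nrm Q u.
Proof.
move=> [hs _].
have -> : (fun j => a * u j) = (fun j => a * u j + 0 * u j).
  by apply: functional_extensionality => j; rewrite mul0r addr0.
rewrite /nrm ip_quad // expr0n /= !mul0r mulr0 !addr0 mul0r addr0.
by rewrite sqrtrM ?sqr_ge0 // sqrtr_sqr.
Qed.

Lemma nrm_tri r (Q : 'M[int]_r) (u w : rvec r) : is_inner_product Q ->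
  nrm Q w <= nrm Q u + nrm Q (fun j => w j - u j).
Proof.
move=> HQ.
have -> : w = (fun j => 1 * u j + 1 * (w j - u j)).
  by apply: functional_extensionality => j; rewrite !mul1r addrC subrK.
apply: le_trans (nrm_lin _ _ HQ ler01 ler01) _.
rewrite !mul1r lerD2l le_eqVlt; apply/orP; left; apply/eqP; congr nrm; apply: functional_extensionality => j.
by ring.
Qed.

Lemma ratio_scale r (Q : 'M[int]_r) (c : charf r) (u : rvec r) (a : Real) :
  is_inner_product Q -> 0 < a -> Defs.ratio Q c (fun j => a * u j) = Defs.ratio Q c u.
Proof.
move=> HQ ha; rewrite /Defs.ratio pair_scale nrm_scale // gtr0_norm //.
rewrite invfM mulrACA mulfV ?gt_eqF // mul1r //.
Qed.
Lemma sigma_comb n r (chis : 'I_n -> charf r) (x : 'I_n -> Cplx) (u w : rvec r) (a b : Real) :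
  0 <= a -> 0 <= b -> sigma chis x u -> sigma chis x w ->
  sigma chis x (fun j => a * u j + b * w j).
Proof.
move=> ha hb hu hw i hi; rewrite pair_lin addr_ge0 // mulr_ge0 //; [exact: hu|exact: hw].
Qed.

Lemma ratio_neg_pair r (Q : 'M[int]_r) (c : charf r) (v : rvec r) :
  is_inner_product Q -> (exists j, v j != 0) ->
  (Defs.ratio Q c v < 0) = (pair c v < 0).
Proof.
move=> HQ hv; have hn := nrm_gt0 HQ hv.
by rewrite /Defs.ratio pmulr_llt0 // invr_gt0.
Qed.

Lemma ratio_lt_iff r (Q : 'M[int]_r) (c : charf r) (v : rvec r) (m : Real) :
  is_inner_product Q -> (exists j, v j != 0) ->
  (Defs.ratio Q c v < m) = (pair c v < m * nrm Q v).
Proof.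
move=> HQ hv; have hn := nrm_gt0 HQ hv.
by rewrite /Defs.ratio ltr_pdivrMr.
Qed.

Lemma local_global n r (chis : 'I_n -> charf r) (Q : 'M[int]_r) (c : charf r)
  (x : 'I_n -> Cplx) (v0 : rvec r) : is_inner_product Q ->
  neg_rel_min chis Q c x v0 ->
  forall v, sigma chis x v -> (exists j, v j != 0) ->
  Defs.ratio Q c v0 <= Defs.ratio Q c v.
Proof.
move=> HQ [hs0 [hnz0 [hneg [eps [heps hloc]]]]] v hs hnz.
rewrite leNgt; apply/negP => hlt.
set m := Defs.ratio Q c v0 in hneg hlt.
set n0 := nrm Q v0; set n1 := nrm Q v.
have hn0 : 0 < n0 := nrm_gt0 HQ hnz0.
have hn1 : 0 < n1 := nrm_gt0 HQ hnz.
have hp1 : pair c v < m * n1 by rewrite -ratio_lt_iff.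
have hp0 : pair c v0 = m * n0 by rewrite /m /Defs.ratio -/n0 divfK ?gt_eqF.
set d := nrm Q (fun j => v j - v0 j).
have hd : 0 <= d := nrm_ge0 _ _.
set t := eps / (eps + d + 1).
have hden : 0 < eps + d + 1 by lra.
have ht0 : 0 < t by rewrite divr_gt0.
have ht1 : t < 1 by rewrite ltr_pdivrMr // mul1r; lra.
set w := fun j => (1 - t) * v0 j + t * v j.
have hsw : sigma chis x w by apply: sigma_comb => //; lra.
have hpw : pair c w = (1 - t) * pair c v0 + t * pair c v by rewrite pair_lin.
have hpw' : pair c w < m * ((1 - t) * n0 + t * n1).
  rewrite hpw hp0.
  have : t * pair c v < t * (m * n1) by rewrite ltr_pM2l.
  lra.
have hm : m < 0 := hneg.
have hnw : nrm Q w <= (1 - t) * n0 + t * n1 by apply: nrm_lin => //; lra.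
have hpwneg : pair c w < 0.
  apply: lt_le_trans hpw' _; rewrite nmulr_rle0 //.
  apply: addr_ge0; apply: mulr_ge0; lra.
have hwnz : exists j, w j != 0.
  case: (nonzero_dec w) => // h0; move: hpwneg; by rewrite pair0 // ltxx.
have hnwp := nrm_gt0 HQ hwnz.
have hdist : nrm Q (fun j => w j - v0 j) < eps.
  have -> : (fun j => w j - v0 j) = (fun j => t * (v j - v0 j)).
    by apply: functional_extensionality => j; rewrite /w; ring.
  rewrite nrm_scale // gtr0_norm // -/d /t.
  rewrite mulrAC ltr_pdivrMr // ltr_pM2l //; lra.
have := hloc w hsw hwnz hdist; rewrite -/m leNgt => /negP; apply.
rewrite ratio_lt_iff //.
apply: lt_le_trans hpw' _.
by rewrite ler_wnM2l // ltW.
Qed.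
Definition near_pt r (v : rvec r) (P : rvec r -> Prop) :=
  exists d : Real, 0 < d /\ forall w : rvec r, (forall j, `|w j - v j| < d) -> P w.

Lemma near_true r (v : rvec r) (P : rvec r -> Prop) : (forall w, P w) -> near_pt v P.
Proof. move=> h; exists 1; split => // w _; exact: h. Qed.

Lemma near_and r (v : rvec r) (P1 P2 : rvec r -> Prop) :
  near_pt v P1 -> near_pt v P2 -> near_pt v (fun w => P1 w /\ P2 w).
Proof.
move=> [d1 [h1 H1]] [d2 [h2 H2]]; exists (Num.min d1 d2); split.
  by rewrite lt_min h1 h2.
move=> w hw; split; [apply: H1|apply: H2] => j; have := hw j; rewrite lt_min => /andP[] //.
Qed.

Lemma near_all (I : finType) r (v : rvec r) (P : I -> rvec r -> Prop) :
  (forall i, near_pt v (P i)) -> near_pt v (fun w => forall i, P i w).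
Proof.
move=> h.
suff: forall s : seq I, near_pt v (fun w => forall i, i \in s -> P i w).
  move=> /(_ (enum I)) [d [hd H]]; exists d; split => // w hw i.
  by apply: H => //; rewrite mem_enum.
elim=> [|a s IH]; first by apply: near_true.
have := near_and (h a) IH; case=> d [hd H]; exists d; split => // w hw i.
rewrite in_cons => /orP[/eqP -> | hi]; first by case: (H w hw).
by case: (H w hw) => _; apply.
Qed.

Lemma pair_diff_bound r (c : charf r) (v w : rvec r) (d : Real) :
  (forall j, `|w j - v j| < d) ->
  `|pair c w - pair c v| <= (\sum_j `|(c j)%:~R : Real|) * d.
Proof.
move=> hw; rewrite /pair -sumrB mulr_suml.
apply: le_trans (ler_norm_sum _ _ _) _; apply: ler_sum => j _.
by rewrite -mulrBr normrM ler_wpM2l // ltW.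
Qed.

Lemma nrm_small r (Q : 'M[int]_r) (u : rvec r) (d : Real) : 0 < d ->
  (forall j, `|u j| < d) ->
  nrm Q u <= d * (\sum_i \sum_j `|(Q i j)%:~R : Real| + 1).
Proof.
move=> hd hu; set T := \sum_i \sum_j `|(Q i j)%:~R : Real|.
have hT : 0 <= T by apply: sumr_ge0 => i _; apply: sumr_ge0 => j _.
have hip : ip Q u u <= d ^+ 2 * T.
  apply: le_trans (ler_norm _) _.
  rewrite /ip /T mulr_sumr.
  apply: le_trans (ler_norm_sum _ _ _) _; apply: ler_sum => i _.
  rewrite mulr_sumr.
  apply: le_trans (ler_norm_sum _ _ _) _; apply: ler_sum => j _.
  rewrite !normrM.
  have h1 := ltW (hu i); have h2 := ltW (hu j).
  have hq := normr_ge0 ((Q i j)%:~R : Real).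
  have hui := normr_ge0 (u i); have huj := normr_ge0 (u j).
  rewrite mulrAC ler_wpM2r // expr2; exact: ler_pM.
have hpos : 0 <= d * (T + 1) by rewrite mulr_ge0 // ?ltW //; lra.
rewrite /nrm -(ger0_norm hpos) -sqrtr_sqr ler_sqrt ?sqr_ge0 //.
apply: le_trans hip _.
rewrite exprMn ler_wpM2l ?sqr_ge0 //.
have : 0 <= T ^+ 2 + T + 1 by rewrite !addr_ge0 // sqr_ge0.
move=> h; have -> : (T + 1) ^+ 2 = T + (T ^+ 2 + T + 1) by ring.
by rewrite lerDl.
Qed.
Lemma near_pair r (c : charf r) (v : rvec r) :
  0 < pair c v -> near_pt v (fun w => 0 < pair c w).
Proof.
move=> hv; pose C : Real := \sum_j `|(c j)%:~R : Real|.
have hC : 0 <= C by apply: sumr_ge0.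
exists (pair c v / (C + 1)); split; first by rewrite divr_gt0 //; lra.
move=> w hw; have hb := pair_diff_bound c hw; rewrite -/C in hb.
have e : C * (pair c v / (C + 1)) < pair c v.
  rewrite mulrA ltr_pdivrMr; last lra.
  nra.
move: hb; rewrite mulrC ler_norml => /andP[h1 h2].
lra.
Qed.
Lemma near_ratio r (Q : 'M[int]_r) (c : charf r) (v : rvec r) (m : Real) :
  is_inner_product Q -> m <= 0 -> pair c v < m * nrm Q v ->
  near_pt v (fun w => pair c w < m * nrm Q w).
Proof.
move=> HQ hm hv.
pose C : Real := \sum_j `|(c j)%:~R : Real|.
pose T : Real := \sum_i \sum_j `|(Q i j)%:~R : Real|.
have hC : 0 <= C by apply: sumr_ge0.
have hT : 0 <= T by apply: sumr_ge0 => i _; apply: sumr_ge0.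
pose g := m * nrm Q v - pair c v.
have hg : 0 < g by rewrite /g; lra.
pose K := C + (- m) * (T + 1).
have hK : 0 <= K by rewrite /K addr_ge0 // mulr_ge0 //; lra.
pose d := g / (K + 1).
have hd : 0 < d by rewrite /d divr_gt0 //; lra.
have hdK : d * (K + 1) = g by rewrite /d divfK //; apply/lt0r_neq0; lra.
exists d; split => // w hw.
have hb := pair_diff_bound c hw; rewrite -/C in hb.
move: hb; rewrite ler_norml => /andP[_ h2].
have hsm := nrm_small Q hd hw; rewrite -/T in hsm.
have htri := nrm_tri v w HQ.
have hnw : nrm Q w <= nrm Q v + d * (T + 1) by lra.
have hmn : m * (nrm Q v + d * (T + 1)) <= m * nrm Q w by rewrite ler_wnM2l.
have e : d * (K + 1) = C * d + (- m) * (d * (T + 1)) + d by rewrite /K; ring.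
rewrite hdK /g in e.
nra.
Qed.
Lemma rat_approx (y eta : Real) : 0 < eta -> exists b : rat, `|ratr b - y| < eta.
Proof.
move=> he.
pose N := Num.bound (eta^-1).
have hN : eta^-1 < N%:R by apply: archi_boundP; rewrite invr_ge0 ltW.
have hN0 : (0 : Real) < N%:R by apply: lt_trans hN; rewrite invr_gt0.
pose f := Num.floor (y * N%:R).
exists (f%:~R / N%:R).
rewrite fmorph_div rmorph_int rmorph_nat.
have h1 := floor_le (y * N%:R); have h2 := floorD1_gt (y * N%:R).
rewrite -/f intrD in h1 h2.
have e : f%:~R / N%:R - y = - ((y * N%:R - f%:~R) / N%:R).
  by field; apply/lt0r_neq0.
rewrite e normrN ger0_norm; last by rewrite divr_ge0 // ?subr_ge0 // ltW.
rewrite ltr_pdivrMr //.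
have : eta^-1 * eta < N%:R * eta by rewrite ltr_pM2r.
rewrite mulVf ?gt_eqF //.
move=> h3; lra.
Qed.
Lemma density n r (chis : 'I_n -> charf r) (x : 'I_n -> Cplx) (v : rvec r)
  (P : rvec r -> Prop) :
  sigma chis x v -> near_pt v P ->
  exists q : 'I_r -> rat,
    sigma chis x (fun j => ratr (q j)) /\ P (fun j => ratr (q j)).
Proof.
move=> hsig HP.
have hin : near_pt v (fun w => forall i,
    (i \in supp x) && (pair (chis i) v != 0) -> 0 < pair (chis i) w).
  apply: near_all => i.
  case: (boolP ((i \in supp x) && (pair (chis i) v != 0))) => h; last first.
    by apply: near_true.
  have hp : 0 < pair (chis i) v.
    by move/andP: h => [hs hne]; rewrite lt_def hne (hsig i hs).
  have [d [hd H]] := near_pair hp; exists d; split => // w hw _; exact: H.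
have [d [hd H]] := near_and HP hin.
pose cnd i := (i \in supp x) && (pair (chis i) v == 0).
pose A : 'M[rat]_(r, n) :=
  \matrix_(j, i) (if cnd i then ((chis i j)%:~R : rat) else 0).
pose vr : 'rV[Real]_r := \row_j v j.
have hvA : vr *m (map_mx ratr A) = 0.
  apply/rowP => i; rewrite !mxE.
  case: (boolP (cnd i)) => hc.
    transitivity (pair (chis i) v); last by move/andP: hc => [_ /eqP].
    rewrite /pair; apply: eq_bigr => j _; rewrite !mxE hc rmorph_int mulrC //.
  by apply: big1 => j _; rewrite !mxE (negbTE hc) rmorph0 mulr0.
have : (vr <= kermx (map_mx ratr A))%MS by rewrite sub_kermx hvA.
rewrite -map_kermx => /submxP [a ha].
pose K := kermx A.
pose M : Real := \sum_j \sum_k `|ratr (K k j)|.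
have hM : 0 <= M by apply: sumr_ge0 => j _; apply: sumr_ge0.
pose eta := d / (M + 1).
have heta : 0 < eta by rewrite divr_gt0 //; lra.
have : forall k, exists b : rat, `|ratr b - a 0 k| < eta.
  by move=> k; apply: rat_approx.
move=> /fin_all_exists [b hb].
pose q := (\row_k b k) *m K.
have hclose : forall j, `|ratr (q 0 j) - v j| < d.
  move=> j.
  have ev : v j = \sum_k a 0 k * ratr (K k j).
    have <- : vr 0 j = v j by rewrite mxE.
    rewrite ha !mxE; apply: eq_bigr => k _; rewrite mxE //.
  have eq : (ratr (q 0 j) : Real) = \sum_k (ratr (b k) : Real) * ratr (K k j).
    rewrite !mxE rmorph_sum; apply: eq_bigr => k _; rewrite mxE rmorphM //.
  rewrite eq ev -sumrB.
  apply: le_lt_trans (ler_norm_sum _ _ _) _.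
  apply: le_lt_trans (_ : _ <= eta * \sum_k `|ratr (K k j)|) _.
    rewrite mulr_sumr; apply: ler_sum => k _.
    by rewrite -mulrBl normrM ler_wpM2r // ltW.
  have hcol : \sum_k `|ratr (K k j)| <= M.
    rewrite /M [X in _ <= X](bigD1 j) //= lerDl; apply: sumr_ge0 => j' _; by apply: sumr_ge0.
  apply: le_lt_trans (_ : _ <= eta * M) _; first by rewrite ler_wpM2l // ltW.
  rewrite /eta mulrAC ltr_pdivrMr; last lra.
  rewrite ltr_pM2l //; lra.
exists (fun j => q 0 j); split.
  move=> i hi.
  case: (boolP (pair (chis i) v == 0)) => hz; last first.
    apply/ltW; apply: (proj2 (H _ hclose)); by rewrite hi hz.
  have hqA : q *m A = 0 by rewrite /q -mulmxA mulmx_ker mulmx0.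
  have := congr1 (fun Z : 'M[rat]_(1, n) => Z 0 i) hqA; rewrite !mxE.
  move=> hs0.
  have hAj : forall j, A j i = (chis i j)%:~R by move=> j; rewrite /A mxE /cnd hi hz.
  have e : (ratr (\sum_j q 0 j * ((chis i j)%:~R : rat)) : Real) =
           pair (chis i) (fun j => ratr (q 0 j)).
    rewrite rmorph_sum /pair; apply: eq_bigr => j _.
    by rewrite rmorphM rmorph_int mulrC.
  rewrite -e.
  have -> : \sum_j q 0 j * ((chis i j)%:~R : rat) = 0.
    rewrite -[RHS]hs0; apply: eq_bigr => j _; by rewrite hAj.
  by rewrite rmorph0.
exact: (proj1 (H _ hclose)).
Qed.
Lemma rat_lattice r (q : 'I_r -> rat) : exists (D : int) (mu : lattice r),
  0 < D /\ forall j, ((mu j)%:~R : Real) = D%:~R * ratr (q j).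
Proof.
pose D : int := \prod_j denq (q j).
exists D, (fun j => numq (q j) * \prod_(k | k != j) denq (q k)); split.
  by apply: prodr_gt0 => j _; apply: denq_gt0.
move=> j.
have e : ((numq (q j) * \prod_(k | k != j) denq (q k))%:~R : rat) = D%:~R * q j.
  have pm : forall (P : pred 'I_r) (F : 'I_r -> int),
      ((\prod_(k | P k) F k)%:~R : rat) = \prod_(k | P k) (F k)%:~R.
    by move=> P F; apply: (big_morph _ (@intrM rat)).
  rewrite intrM numqE /D [in RHS](bigD1 j) //= intrM !pm.
  ring.
have := congr1 (fun z => (ratr z : Real)) e; rewrite /=.
rewrite ratr_int => ->. by rewrite rmorphM rmorph_int.
Qed.
Lemma lattice_global n r (chis : 'I_n -> charf r) (Q : 'M[int]_r) (c : charf r)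
  (x : 'I_n -> Cplx) (l : lattice r) : is_inner_product Q ->
  is_optimal chis Q c x l -> Defs.ratio Q c (embed l) <= 0 ->
  forall v, sigma chis x v -> (exists j, v j != 0) ->
  Defs.ratio Q c (embed l) <= Defs.ratio Q c v.
Proof.
move=> HQ [_ [_ hopt]] hm0 v hs hnz.
rewrite leNgt; apply/negP => hlt.
set m := Defs.ratio Q c (embed l) in hm0 hlt hopt.
have hv : pair c v < m * nrm Q v by rewrite -ratio_lt_iff.
have [q [hsq hPq]] := density hs (near_ratio HQ hm0 hv).
set w := (fun j => ratr (q j) : Real) in hsq hPq.
have [D [mu [hD hmu]]] := rat_lattice q.
have hD' : (0 : Real) < D%:~R by rewrite ltr0z.
have emb : embed mu = (fun j => D%:~R * w j).
  by apply: functional_extensionality => j; rewrite /embed hmu.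
have hpm : pair c (embed mu) < m * nrm Q (embed mu).
  rewrite emb pair_scale nrm_scale // gtr0_norm //.
  rewrite mulrCA ltr_pM2l //.
have hnz' : exists j, embed mu j != 0.
  case: (nonzero_dec (embed mu)) => // h0.
  move: hpm; rewrite pair0 // /nrm ip0 // sqrtr0 mulr0 ltxx //.
have hlat : lat_nonzero mu.
  case: hnz' => j hj; exists j; move: hj; rewrite /embed intr_eq0 //.
have hsm : lim_exists chis x mu.
  rewrite /lim_exists emb => i hi; rewrite pair_scale.
  apply: mulr_ge0; [exact: ltW | exact: hsq].
have := hopt mu hlat hsm; rewrite -/m leNgt => /negP; apply.
by rewrite ratio_lt_iff.
Qed.
Lemma in_S_supp n r (chis : 'I_n -> charf r) (Q : 'M[int]_r) (c : charf r)
  (l : lattice r) (x y : 'I_n -> Cplx) :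
  supp y = supp x -> in_S chis Q c l y <-> in_S chis Q c l x.
Proof. by move=> h; rewrite /in_S /unstable /is_optimal /lim_exists /sigma h. Qed.

Lemma embed_nz r (l : lattice r) : lat_nonzero l -> exists j, embed l j != 0.
Proof. by case=> j hj; exists j; rewrite /embed intr_eq0. Qed.

Theorem proposition3p13 (n r : nat) (chis : 'I_n -> charf r) (Q : 'M[int]_r)
  (HQ : is_inner_product Q) (c : charf r) (l : lattice r)
  (Hl : in_Lambda chis Q c l) (x : 'I_n -> Cplx) :
  (in_S chis Q c l x <-> neg_rel_min chis Q c x (embed l)) /\
  (neg_rel_min chis Q c x (embed l) <->
     (forall y : 'I_n -> Cplx, in_L (supp x) y -> in_S chis Q c l y)).
Proof.
have hind : indivisible l by case: Hl => x' [_ [h _]].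
have h12 : in_S chis Q c l x -> neg_rel_min chis Q c x (embed l).
  move=> [[mu0 [hmu0 hp0]] hopt].
  have hnz0 : exists j, embed mu0 j != 0.
    case: (nonzero_dec (embed mu0)) => // h0; move: hp0; by rewrite pair0 // ltxx.
  have hlat0 : lat_nonzero mu0.
    by case: hnz0 => j hj; exists j; move: hj; rewrite /embed intr_eq0.
  have [_ [hlim hmin]] := hopt.
  have hneg : Defs.ratio Q c (embed l) < 0.
    apply: le_lt_trans (hmin mu0 hlat0 hmu0) _.
    by rewrite (ratio_neg_pair _ HQ hnz0).
  split; first exact: hlim.
  split; first exact: embed_nz (proj1 hind).
  split; first exact: hneg.
  exists 1; split => // v hv hvnz _.
  by apply: (lattice_global HQ hopt (ltW hneg)).
have h21 : neg_rel_min chis Q c x (embed l) -> in_S chis Q c l x.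
  move=> hn; have [hs [hnz [hneg _]]] := hn.
  split.
    by exists l; split => //; rewrite -(ratio_neg_pair _ HQ hnz).
  split => //; split => // mu hmu hlim.
  apply: (local_global HQ hn) => //; exact: embed_nz.
split; first by split.
split.
  move=> hn y hy; rewrite (in_S_supp _ _ _ _ hy); exact: h21.
by move=> h; apply: h12; apply: h.
Qed.
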